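(* Let $k\geq 4$ and let $G$ be a diregular $(2,k,+3)$-digraph. Let $u,v$ be distinct vertices with exactly one common out-neighbour $u_2$, and write $N^+(u)=\{u_1,u_2\}$, $N^+(v)=\{v_1,u_2\}$. Then $v_1\in O(u)$, $u_1\in O(v)$, and $|O(u)\cap N^+(v_1)|=|O(v)\cap N^+(u_1)|=1$.
   Context: A digraph is $k$-geodetic if for every ordered pair of vertices $x,y$ there is at most one directed path from $x$ to $y$ of length at most $k$ (the trivial path counts). A diregular $(2,k,+3)$-digraph is a $k$-geodetic digraph of order $1+2+\dots+2^k+3$ in which every vertex has in- and out-degree $2$. $N^+(x)$ is the set of out-neighbours of $x$. $d(x,y)$ is the directed distance; $O(x)=\{y: d(x,y)\geq k+1\}$ is the outlier set of $x$. *)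

(* Defs.v *)
From mathcomp Require Import all_boot.
Set Implicit Arguments. Unset Strict Implicit. Unset Printing Implicit Defensive.

Section Digraph.
Variables (V : finType) (e : rel V).

Definition Nout (x : V) : {set V} := [set y | e x y].
Definition Nin (x : V) : {set V} := [set y | e y x].

(* A directed walk from x of length size p is x :: p with path e x p;
   it ends at last x p. k-geodetic: at most one walk of length <= k
   between any ordered pair (the trivial walk [::] counts). *)
Definition k_geodetic (k : nat) : Prop :=
  forall (x : V) (p q : seq V),
    path e x p -> path e x q -> last x p = last x q ->
    size p <= k -> size q <= k -> p = q.

Definition dist_le (n : nat) (x y : V) : bool :=
  [exists m : 'I_n.+1, exists p : m.-tuple V, path e x p && (last x p == y)].

Definition outlier (k : nat) (x : V) : {set V} := [set y | ~~ dist_le k x y].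

Definition diregular (d : nat) : Prop :=
  forall x : V, #|Nout x| = d /\ #|Nin x| = d.

Definition digraph_2k3 (k : nat) : Prop :=
  [/\ k_geodetic k, diregular 2 & #|V| = (\sum_(i < k.+1) 2 ^ i) + 3].

End Digraph.

(* Main.v *)
Require Import Defs.
From mathcomp Require Import all_boot.
From mathcomp Require Import zify.
Set Implicit Arguments. Unset Strict Implicit. Unset Printing Implicit Defensive.

Lemma sum_sub (T : finType) (A B : {set T}) (f : T -> nat) :
  A \subset B -> \sum_(i in A) f i <= \sum_(i in B) f i.
Proof.
move=> sAB; rewrite [X in _ <= X](big_setID A) /=.
have -> : B :&: A = A by apply/setIidPr.
exact: leq_addr.
Qed.

Lemma sum_pow2 n : \sum_(i < n) 2 ^ i = (2 ^ n).-1.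
Proof.
elim: n => [|n IH]; first by rewrite big_ord0.
rewrite big_ord_recr /= IH expnS.
have := expn_gt0 2 n; lia.
Qed.

Lemma sum_disj (T : finType) (A B : {set T}) (f : T -> nat) :
  A :&: B = set0 -> \sum_(i in A :|: B) f i = \sum_(i in A) f i + \sum_(i in B) f i.
Proof.
move=> hAB; rewrite (big_setID A) /=.
have -> : (A :|: B) :&: A = A by apply/setIidPr; apply: subsetUl.
have -> // : (A :|: B) :\: A = B.
rewrite setDUl setDv set0U; apply/setDidPl.
by rewrite -setI_eq0 setIC hAB.
Qed.

Lemma sumU_le (T : finType) (A B : {set T}) (f : T -> nat) :
  \sum_(i in A :|: B) f i <= \sum_(i in A) f i + \sum_(i in B) f i.
Proof.
rewrite (big_setID A) /=.
have -> : (A :|: B) :&: A = A by apply/setIidPr; apply: subsetUl.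
rewrite leq_add2l; apply: sum_sub.
by rewrite setDUl setDv set0U subsetDl.
Qed.

Lemma sum3 (T : finType) (g : T -> nat) x1 x2 x3 :
  \sum_(y in [set x1; x2; x3]) g y <= g x1 + g x2 + g x3.
Proof.
apply: leq_trans (sumU_le _ _ _) _; rewrite big_set1 leq_add2r.
by apply: leq_trans (sumU_le _ _ _) _; rewrite !big_set1.
Qed.

Lemma set3P (T : finType) (x a b c : T) :
  reflect [\/ x = a, x = b | x = c] (x \in [set a; b; c]).
Proof.
apply: (iffP idP) => [|[] ->]; rewrite !inE ?eqxx ?orbT //.
by move=> /orP [/orP [/eqP ->|/eqP ->]|/eqP ->]; [constructor 1|constructor 2|constructor 3].
Qed.

Section Work.
Variables (V : finType) (e : rel V) (k : nat).
Hypothesis Hg : k_geodetic e k.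
Hypothesis Hd : diregular e 2.

Definition lay (i : nat) (x y : V) : bool :=
  [exists p : i.-tuple V, path e x p && (last x p == y)].

Lemma layP i x y :
  reflect (exists p : seq V, [/\ path e x p, last x p = y & size p = i]) (lay i x y).
Proof.
apply: (iffP existsP) => [[p /andP[hp /eqP hl]] | [p [hp hl hs]]].
  by exists p; rewrite size_tuple.
have hs' : size p == i by rewrite hs.
by exists (Tuple hs'); rewrite /= hp hl eqxx.
Qed.

Lemma distP n x y : reflect (exists2 i, i <= n & lay i x y) (dist_le e n x y).
Proof.
apply: (iffP existsP) => [[m hm] | [i hi hl]].
  by exists m; [rewrite -ltnS ltn_ord | exact: hm].
by exists (Ordinal (hi : i < n.+1)).
Qed.

Lemma lay0 x y : lay 0 x y = (x == y).
Proof.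
apply/layP/eqP => [[p [_ <- /size0nil ->]] // | ->].
by exists [::].
Qed.

Lemma layS i x y : lay i.+1 x y = [exists z, e x z && lay i z y].
Proof.
apply/layP/existsP => [[[|z p] [] //= /andP[hz hp] hl [hs]] | [z /andP[hz /layP[p [hp hl hs]]]]].
  by exists z; rewrite hz; apply/layP; exists p.
by exists (z :: p); rewrite /= hz hp hl hs.
Qed.

Lemma layS_first i x z y : e x z -> lay i z y -> lay i.+1 x y.
Proof. by move=> hz hl; rewrite layS; apply/existsP; exists z; rewrite hz. Qed.

Lemma lay_cat i j x z y : lay i x z -> lay j z y -> lay (i + j) x y.
Proof.
move=> /layP[p [hp hl hs]] /layP[q [hq hl' hs']]; apply/layP.
exists (p ++ q); rewrite cat_path last_cat hl hp hq size_cat hs hs'; split => //.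
Qed.

Lemma lay_last i x z y : lay i x z -> e z y -> lay i.+1 x y.
Proof.
move=> h1 h2; rewrite -addn1; apply: lay_cat h1 _.
by apply: layS_first h2 _; rewrite lay0.
Qed.

Lemma lay_lastP i x y : lay i.+1 x y -> exists2 z, lay i x z & e z y.
Proof.
move=> /layP[p [hp hl hs]].
case/lastP: p hp hl hs => [//|p z]; rewrite rcons_path last_rcons size_rcons => /andP[hp hz] hl [hs].
exists (last x p); first by apply/layP; exists p.
by rewrite -hl.
Qed.

Lemma walk_uniq x p q : path e x p -> path e x q -> last x p = last x q ->
  size p <= k -> size q <= k -> p = q.
Proof. exact: Hg. Qed.

Lemma lay_uniq i j x y : lay i x y -> lay j x y -> i <= k -> j <= k -> i = j.
Proof.
move=> /layP[p [hp hl hs]] /layP[q [hq hl' hs']] hi hj.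
have := walk_uniq hp hq; rewrite hl hl' hs hs' => /(_ erefl hi hj) hpq.
by rewrite -hs -hs' hpq.
Qed.

Lemma lay_self_gt0 i x : lay i x x -> 0 < i -> k < i.
Proof.
move=> h hi; rewrite ltnNge; apply/negP => hik.
have := lay_uniq h (_ : lay 0 x x); rewrite lay0 eqxx => /(_ erefl hik (leq0n _)).
lia.
Qed.

Lemma lay_branch i j x x1 x2 y : e x x1 -> e x x2 -> lay i x1 y -> lay j x2 y ->
  i < k -> j < k -> x1 = x2.
Proof.
move=> h1 h2 /layP[p [hp hl hs]] /layP[q [hq hl' hs']] hi hj.
have : x1 :: p = x2 :: q.
  apply: (@walk_uniq x); rewrite /= ?h1 ?h2 ?hp ?hq ?hl ?hl' ?hs ?hs' //.
by case.
Qed.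

Lemma out2 x : exists x1 x2, [/\ x1 != x2, e x x1, e x x2 &
   forall y, e x y -> y = x1 \/ y = x2].
Proof.
have [/eqP /cards2P [x1 [x2 [hne hN]]] _] := Hd x.
exists x1, x2; split => //.
- have : x1 \in Nout e x by rewrite hN !inE eqxx.
  by rewrite inE.
- have : x2 \in Nout e x by rewrite hN !inE eqxx orbT.
  by rewrite inE.
- move=> y hy; have : y \in Nout e x by rewrite inE.
  by rewrite hN !inE => /orP[/eqP|/eqP]; [left|right].
Qed.

Lemma in2 x : exists x1 x2, [/\ x1 != x2, e x1 x, e x2 x &
   forall y, e y x -> y = x1 \/ y = x2].
Proof.
have [_ /eqP /cards2P [x1 [x2 [hne hN]]]] := Hd x.
exists x1, x2; split => //.
- have : x1 \in Nin e x by rewrite hN !inE eqxx.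
  by rewrite inE.
- have : x2 \in Nin e x by rewrite hN !inE eqxx orbT.
  by rewrite inE.
- move=> y hy; have : y \in Nin e x by rewrite inE.
  by rewrite hN !inE => /orP[/eqP|/eqP]; [left|right].
Qed.

Lemma in_third w a b c : e a w -> e b w -> e c w -> a != c -> b != c -> a = b.
Proof.
move=> ha hb hc hac hbc; have [x1 [x2 [hne _ _ hall]]] := in2 w.
move: hac hbc.
by case: (hall _ ha) => ->; case: (hall _ hb) => ->; case: (hall _ hc) => -> //;
  rewrite ?eqxx.
Qed.

Lemma out_third x a b c : e x a -> e x b -> e x c -> a != c -> b != c -> a = b.
Proof.
move=> ha hb hc hac hbc; have [x1 [x2 [hne _ _ hall]]] := out2 x.
move: hac hbc.
by case: (hall _ ha) => ->; case: (hall _ hb) => ->; case: (hall _ hc) => -> //;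
  rewrite ?eqxx.
Qed.

Definition B j x : {set V} := [set y | dist_le e j x y].
Definition O x : {set V} := outlier e k x.

Lemma inB j x y : (y \in B j x) = dist_le e j x y.
Proof. by rewrite inE. Qed.

Lemma inO x y : (y \in O x) = ~~ dist_le e k x y.
Proof. by rewrite inE. Qed.

Lemma lay_dist i j x y : lay i x y -> i <= j -> dist_le e j x y.
Proof. by move=> h hi; apply/distP; exists i. Qed.

Lemma dist_refl j x : dist_le e j x x.
Proof. by apply: (@lay_dist 0); rewrite ?lay0. Qed.

Lemma dist_S j x y :
  dist_le e j.+1 x y = (x == y) || [exists z, e x z && dist_le e j z y].
Proof.
apply/distP/orP => [[[|i] hi hl] | [/eqP <- | /existsP [z /andP[hz /distP [i hi hl]]]]].
- by left; rewrite -lay0.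
- right; move: hl; rewrite layS => /existsP [z /andP [hz hl]].
  by apply/existsP; exists z; rewrite hz; apply: lay_dist hl _.
- by exists 0; rewrite ?lay0.
- by exists i.+1; [| apply: layS_first hz hl].
Qed.

Lemma dist_mono i j x y : dist_le e i x y -> i <= j -> dist_le e j x y.
Proof. by move=> /distP [l hl h] hij; apply: lay_dist h _; apply: leq_trans hl hij. Qed.

Lemma dist_first j x z y : e x z -> dist_le e j z y -> dist_le e j.+1 x y.
Proof. by move=> hz h; rewrite dist_S; apply/orP; right; apply/existsP; exists z; rewrite hz. Qed.

Lemma card_ball j x : j <= k -> #|B j x| = (2 ^ j.+1).-1.
Proof.
elim: j x => [|j IH] x hj.
  have -> : B 0 x = [set x].
    apply/setP => y; rewrite inB inE; apply/distP/idP => [[i hi hl]|/eqP ->].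
      by move: hi hl; rewrite leqn0 => /eqP ->; rewrite lay0 eq_sym.
    by exists 0; rewrite ?lay0.
  by rewrite cards1.
have [x1 [x2 [hne h1 h2 hall]]] := out2 x.
have -> : B j.+1 x = x |: (B j x1 :|: B j x2).
  apply/setP => y; rewrite !inE dist_S eq_sym; congr (_ || _).
  apply/existsP/orP => [[z /andP[hz hd]] | [hd|hd]].
  - by case: (hall _ hz) => <-; [left|right].
  - by exists x1; rewrite h1.
  - by exists x2; rewrite h2.
have hx : forall xi, e x xi -> x \notin B j xi.
  move=> xi hxi; rewrite inB; apply/negP => /distP [i hi hl].
  have := lay_self_gt0 (layS_first hxi hl) (ltn0Sn _); lia.
rewrite cardsU1 inE negb_or !hx //= cardsU !IH; try lia.
have -> : B j x1 :&: B j x2 = set0.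
  apply/setP => y; rewrite !inE; apply/negP => /andP [/distP [i hi hl] /distP [i' hi' hl']].
  have := lay_branch h1 h2 hl hl'; move/eqP: hne => hne.
  by move=> H; apply: hne; apply: H; lia.
rewrite cards0 !expnS.
have := expn_gt0 2 j; lia.
Qed.

Hypothesis Hn : #|V| = (\sum_(i < k.+1) 2 ^ i) + 3.

Lemma card_O x : #|O x| = 3.
Proof.
have hc := cardsC (B k x).
have -> : O x = ~: B k x by apply/setP => y; rewrite !inE.
move: hc; rewrite card_ball // cardT -cardE Hn sum_pow2.
have := expn_gt0 2 k.+1; lia.
Qed.

Lemma SL s s1 s2 w w' : s1 != s2 -> e s s1 -> e s s2 -> w \in O s -> e w w' ->
  w' != s1 -> w' != s2 -> (w' \in O s1) || (w' \in O s2).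
Proof.
move=> hne h1 h2 hw hww' hn1 hn2.
rewrite !inO -negb_and; apply/negP => /andP[/distP[i hi hl] /distP[i' hi' hl']].
case: i hi hl => [|i] hi hl; first by move: hl; rewrite lay0 eq_sym (negbTE hn1).
case: i' hi' hl' => [|i'] hi' hl'; first by move: hl'; rewrite lay0 eq_sym (negbTE hn2).
have [r1 hr1 er1] := lay_lastP hl.
have [r2 hr2 er2] := lay_lastP hl'.
have hrw : forall r si j, e s si -> lay j si r -> j.+1 <= k -> r != w.
  move=> r si j hsi hj hjk; apply/negP => /eqP hr; move: hw; rewrite inO; subst r.
  by rewrite (lay_dist (layS_first hsi hj) hjk).
have hr : r1 = r2 := in_third er1 er2 hww' (hrw _ _ _ h1 hr1 hi) (hrw _ _ _ h2 hr2 hi').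
subst r2; move/eqP: hne; apply.
by apply: (lay_branch h1 h2 hr1 hr2).
Qed.

Fixpoint flay (t y : V) (n : nat) : nat :=
  if n is n'.+1 then (if lay n' t y then n' else flay t y n') else 0.
Definition dep t y := flay t y k.

Lemma depE t y i : lay i t y -> i < k -> dep t y = i.
Proof.
move=> hl hik; rewrite /dep.
have : forall n, i < n -> n <= k -> flay t y n = i; last by apply.
elim => [//|n IH] hin hnk /=.
case hn: (lay n t y).
  by apply: (lay_uniq hn hl); lia.
have [hin0|hlt] := eqVneq i n; first by subst; rewrite hl in hn.
apply: IH; lia.
Qed.

Hypothesis hk : 4 <= k.

Lemma depP t y : y \in B k.-1 t -> lay (dep t y) t y /\ dep t y < k.
Proof.
rewrite inB => /distP [i hi hl].
by rewrite (depE hl); last lia; split => //; lia.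
Qed.

Lemma inT i t y : lay i t y -> i < k -> y \in B k.-1 t.
Proof. by move=> hl hi; rewrite inB; apply: lay_dist hl _; lia. Qed.

Lemma EL s z z' : z \in B k.-1 s -> z' \in B k.-1 s -> e z z' ->
  dep s z' = (dep s z).+1.
Proof.
move=> /depP [h1 h1k] /depP [h2 h2k] ez.
have := lay_last h1 ez => h3.
by apply: (lay_uniq h2 h3); lia.
Qed.

Lemma child_T s z z' : z \in B k.-1 s -> (dep s z).+1 < k -> e z z' ->
  z' \in B k.-1 s /\ dep s z' = (dep s z).+1.
Proof.
move=> /depP [h1 h1k] hk' ez.
have h3 := lay_last h1 ez.
by split; [apply: inT h3 hk' | apply: depE].
Qed.

Lemma lay_split_uniq i j t c1 c2 y : lay i t c1 -> lay j c1 y -> lay i t c2 ->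
  lay j c2 y -> i + j <= k -> c1 = c2.
Proof.
move=> /layP [p1 [hp1 hl1 hs1]] /layP [q1 [hq1 hm1 hz1]].
move=> /layP [p2 [hp2 hl2 hs2]] /layP [q2 [hq2 hm2 hz2]] hij.
have : p1 ++ q1 = p2 ++ q2.
  apply: (@walk_uniq t); rewrite ?cat_path ?last_cat ?hl1 ?hl2 ?hp1 ?hp2 ?hq1 ?hq2 ?hm1 ?hm2
    ?size_cat ?hs1 ?hs2 ?hz1 ?hz2 //.
move=> /(congr1 (take i)); rewrite -{1}hs1 take_size_cat // -hs2 take_size_cat // => hp.
by rewrite -hl1 -hl2 hp.
Qed.

Definition Ys s t : {set V} := [set y | (y \in B k.-1 t) && (y \notin B k.-1 s)].
Definition reach t c y := (dep t c <= dep t y) && lay (dep t y - dep t c) c y.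
Definition Yb s t z : {set V} :=
  [set y in Ys s t | (dep t z < dep t y) && lay (dep t y - dep t z) z y].
Definition wt t y := 2 ^ (k.-1 - dep t y).
Definition bad s t z := [&& z \in B k.-1 s, z \in B k.-1 t & dep t z < dep s z].

Lemma weight s t h : forall z, bad s t z -> dep t z + h = k.-1 ->
  2 ^ h <= \sum_(y in Yb s t z) wt t y.
Proof.
elim: h => [|h IH] z /and3P [hzs hzt hlt] hh.
  by have [_ hk1] := depP hzs; clear -hk1 hh hlt; lia.
have [hlz hzk] := depP hzt.
have [c1 [c2 [hne e1 e2 _]]] := out2 z.
pose part c := if c \in B k.-1 s then Yb s t c else [set c].
have hc : forall c, e z c -> [/\ c \in B k.-1 t, dep t c = (dep t z).+1,
    2 ^ h <= \sum_(y in part c) wt t y, part c \subset Yb s t z &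
    forall y, y \in part c -> reach t c y].
  move=> c ec.
  have hlt1 : (dep t z).+1 < k by clear -hh hk; lia.
  have [hct hdc] := child_T hzt hlt1 ec.
  split => //.
  - rewrite /part; case: ifP => hcs.
      apply: IH; last by clear -hh hdc; lia.
      by rewrite /bad hcs hct /= (EL hzs hcs ec) hdc.
    rewrite big_set1 /wt hdc.
    by have -> : k.-1 - (dep t z).+1 = h by clear -hh; lia.
  - rewrite /part; case: ifP => hcs; apply/subsetP => y.
      rewrite !inE => /andP [hy /andP [hlt' hl]]; rewrite hy /=.
      apply/andP; split; first by clear -hdc hlt'; lia.
      have -> : dep t y - dep t z = (dep t y - dep t c).+1 by clear -hdc hlt'; lia.
      exact: layS_first ec hl.
    rewrite inE => /eqP ->.
    have hcY : c \in Ys s t by rewrite /Ys in_set hct hcs.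
    rewrite /Yb in_set hcY hdc ltnSn /=.
    have -> : (dep t z).+1 - dep t z = 1 by clear; lia.
    by apply: layS_first ec _; rewrite lay0.
  - move=> y; rewrite /part; case: ifP => hcs.
      by rewrite !inE => /andP[_ /andP[hlt' hl]]; rewrite /reach (ltnW hlt') hl.
    by rewrite inE => /eqP ->; rewrite /reach leqnn subnn lay0 eqxx.
have [ht1 hd1 hs1 hsub1 hr1] := hc _ e1.
have [ht2 hd2 hs2 hsub2 hr2] := hc _ e2.
have hdisj : part c1 :&: part c2 = set0.
  apply/setP => y; rewrite inE in_set0; apply/negP => /andP [hy1 hy2].
  have /andP [hr1a hr1b] := hr1 _ hy1; have /andP[hr2a hr2b] := hr2 _ hy2.
  have hyT : y \in B k.-1 t.
    by move/subsetP: hsub1 => /(_ _ hy1); rewrite !inE => /andP [/andP[]].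
  have [_ hyk] := depP hyT.
  have [hlc1 _] := depP ht1; have [hlc2 _] := depP ht2.
  move/eqP: hne; apply.
  apply: (@lay_split_uniq (dep t c1) (dep t y - dep t c1) t c1 c2 y) => //.
  - by rewrite hd1 -hd2.
  - by rewrite hd1 -hd2.
  - by clear -hyk hr1a; lia.
rewrite expnS mul2n -addnn.
apply: leq_trans (leq_add hs1 hs2) _.
rewrite -sum_disj //; apply: sum_sub.
by rewrite subUset hsub1 hsub2.
Qed.

Lemma card_ge (A : {set V}) (s : seq V) y : uniq s ->
  (forall x, x \in s -> x != y -> x \in A) -> (size s).-1 <= #|A|.
Proof.
move=> hu hs.
have h1 : #|[set x in s]| = size s by rewrite cardsE; apply/card_uniqP.
have h2 : [set x in s] :\ y \subset A.
  by apply/subsetP => x; rewrite !inE => /andP[hne hx]; apply: hs.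
have h3 := subset_leq_card h2.
have := cardsD1 y [set x in s]; rewrite h1.
case: (y \in _) => h4; simpl in h4; move: h3 h4; clear; case: (size s) => [|n] /=; lia.
Qed.

Lemma noback i z y : lay i z y -> e y z -> i < k -> False.
Proof.
move=> hl hy hi; have := lay_self_gt0 (lay_last hl hy) (ltn0Sn _).
by clear -hi; lia.
Qed.

Lemma noO x y : y \in B k x -> y \notin O x.
Proof. by rewrite inB inO => ->. Qed.

Lemma T_notO x x1 y : e x x1 -> y \in B k.-1 x1 -> y \notin O x.
Proof.
move=> ex; rewrite inB inO => /distP [i hi hl]; rewrite negbK.
by apply: lay_dist (layS_first ex hl) _; clear -hi hk; lia.
Qed.

Lemma self_notO x : x \notin O x.
Proof. by rewrite inO negbK dist_refl. Qed.

Lemma T_notO1 x y : y \in B k.-1 x -> y \notin O x.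
Proof.
by rewrite inB inO negbK => h; apply: dist_mono h _; clear; lia.
Qed.

Lemma ball_dec x x1 x2 y : e x x1 -> e x x2 -> x1 != x2 -> y \notin O x ->
  [\/ y = x, y \in B k.-1 x1 | y \in B k.-1 x2].
Proof.
move=> h1 h2 hne; rewrite inO negbK.
have -> : k = k.-1.+1 by clear -hk; lia.
rewrite dist_S => /orP [/eqP ->|/existsP [z /andP [hz hd]]]; first by constructor 1.
have hz' : z = x1 \/ z = x2.
  case: (eqVneq z x2) => [->|hzx2]; first by right.
  by left; apply: out_third hz h1 h2 hzx2 hne.
by case: hz' => <-; [constructor 2|constructor 3]; rewrite inB.
Qed.

Lemma lay1 x y : lay 1 x y = e x y.
Proof.
rewrite layS; apply/existsP/idP => [[z /andP[hz]]|h].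
  by rewrite lay0 => /eqP <-.
by exists y; rewrite h lay0 eqxx.
Qed.

Lemma lay2 x y z : e x y -> e y z -> lay 2 x z.
Proof. by move=> h1 h2; apply: layS_first h1 _; rewrite lay1. Qed.

Lemma pow_facts : exists p, [/\ 2 ^ k.-1 = 8 * p, 2 ^ (k - 2) = 4 * p,
  2 ^ (k - 3) = 2 * p & 0 < p].
Proof.
exists (2 ^ (k - 4)); split; last exact: expn_gt0.
- have -> : k.-1 = (k - 4).+3 by clear -hk; lia.
  by rewrite !expnS; clear; lia.
- have -> : k - 2 = (k - 4).+2 by clear -hk; lia.
  by rewrite !expnS; clear; lia.
- have -> : k - 3 = (k - 4).+1 by clear -hk; lia.
  by rewrite !expnS; clear; lia.
Qed.

Lemma L1 u v u1 u2 v1 : u != v -> u1 != u2 -> v1 != u2 -> u1 != v1 ->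
  e u u1 -> e u u2 -> e v v1 -> e v u2 -> v1 \in O u.
Proof.
move=> huv h12 hv12 hu1v1 eu1 eu2 ev1 ev2.
have hk2 : 2 < k by clear -hk; lia.
case hO: (v1 \in O u) => //; exfalso.
case: (ball_dec eu1 eu2 h12 (negbT hO)) => [hv1u | hT1 | hT2].
- subst v1.
  have := lay_uniq (lay2 ev1 eu2) (_ : lay 1 v u2); rewrite lay1 => /(_ ev2).
  by move=> /(_ (ltnW hk2) (ltnW (ltnW hk2))).
-
  have [hj hjk] := depP hT1.
  have hvT1 : v \notin B k.-1 u1.
    apply/negP; rewrite inB => /distP [d hd hl].
    case: (ltnP d.+1 k) => hdk.
      have := lay_uniq (layS_first eu1 (lay_last hl ev2)) (_ : lay 1 u u2).
      by rewrite lay1 => /(_ eu2 hdk (ltnW (ltnW hk2))).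
    have := lay_uniq (lay_last hl ev1) hj.
    have hdk' : d < k by clear -hd hk; lia.
    by move=> /(_ hdk' (ltnW hjk)); clear -hdk hjk; lia.
  have hvO : v \in O u.
    case hvo: (v \in O u) => //.
    case: (ball_dec eu1 eu2 h12 (negbT hvo)) => [hvu | hvT | hvT2].
    + by rewrite hvu eqxx in huv.
    + by rewrite hvT in hvT1.
    + have [hl hlk] := depP hvT2.
      by case: (noback hl ev2 hlk).
  have hv1O2 : v1 \in O u2.
    have hv1u1 : v1 != u1 by rewrite eq_sym.
    case/orP: (SL h12 eu1 eu2 hvO ev1 hv1u1 hv12) => // hh.
    by rewrite (negbTE (T_notO1 hT1)) in hh.
  have hcard : #|O u :\ v| == 2.
    have := cardsD1 v (O u); rewrite card_O hvO /= => hh.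
    by apply/eqP; clear -hh; lia.
  have [a [b [hab hOab]]] := cards2P _ hcard.
  have ha : a \in O u :\ v by rewrite hOab !inE eqxx.
  have hb : b \in O u :\ v by rewrite hOab !inE eqxx orbT.
  move: ha hb; rewrite !in_setD1 => /andP [hav haO] /andP [hbv hbO].
  have hY : forall y, y \in B k.-1 v1 -> y \notin B k.-1 u1 -> [\/ y = u, y = a | y = b].
    move=> y hyv hyu.
    have hyu2 : y \notin B k.-1 u2.
      apply/negP => hy2; have [l1 l1k] := depP hyv; have [l2 l2k] := depP hy2.
      by move/eqP: hv12; apply; apply: lay_branch ev1 ev2 l1 l2 l1k l2k.
    have hyv' : y != v.
      apply/negP => /eqP hyv'; subst y; have [l1 l1k] := depP hyv.
      by case: (noback l1 ev1 l1k).
    case hyo: (y \in O u).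
      have : y \in O u :\ v by rewrite in_setD1 hyv' hyo.
      by rewrite hOab !inE => /orP [/eqP ->|/eqP ->]; [constructor 2|constructor 3].
    case: (ball_dec eu1 eu2 h12 (negbT hyo)) => [->|hh|hh]; first by constructor 1.
    + by rewrite hh in hyu.
    + by rewrite hh in hyu2.
  have hu_dep : u \in B k.-1 v1 -> dep v1 u = k.-1.
    move=> hu; have [hl hlk] := depP hu.
    case: (ltnP (dep v1 u).+1 k) => hdk; last by clear -hdk hlk; lia.
    have := lay_uniq (layS_first ev1 (lay_last hl eu2)) (_ : lay 1 v u2).
    by rewrite lay1 => /(_ ev2 hdk (ltnW (ltnW hk2))).
  have hv1v1 : v1 \in B k.-1 v1 by rewrite inB dist_refl.
  have hd0 : dep v1 v1 = 0 by apply: depE; rewrite ?lay0 // (ltnW (ltnW hk2)).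
  have hbad : bad u1 v1 v1.
    rewrite /bad hT1 hv1v1 hd0 /= lt0n; apply/negP => /eqP hj0.
    by move: hj; rewrite hj0 lay0 (negbTE hu1v1).
  have hw := @weight u1 v1 k.-1 v1 hbad (etrans (congr1 (addn^~ _) hd0) (add0n _)).
  pose g y := if y == u then 1 else
     if (y \in B k.-1 v1) && (dep v1 y == 1) then 2 ^ (k - 2) else 2 ^ (k - 3).
  have hsum : \sum_(y in Yb u1 v1 v1) wt v1 y <= g u + g a + g b.
    apply: leq_trans (sum3 g u a b).
    apply: leq_trans (_ : \sum_(y in Yb u1 v1 v1) g y <= _).
      apply: leq_sum => y; rewrite /Yb /Ys !in_set => /andP [/andP [hyv hyu] /andP [hlt _]].
      rewrite -inB in hyv.
      rewrite /wt /g hd0 in hlt *.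
      case: eqP => [hyu'|_].
        by subst y; rewrite (hu_dep hyv) subnn.
      rewrite hyv /=; case: eqP => [->|hne]; first by rewrite (_ : k.-1 - 1 = k - 2) //; clear; lia.
      by apply: leq_pexp2l => //; clear -hne hlt; lia.
    apply: sum_sub; apply/subsetP => y; rewrite /Yb /Ys !in_set => /andP [/andP [hyv hyu] _].
    rewrite -inB in hyv; rewrite -inB in hyu.
    by case: (hY y hyv hyu) => ->; rewrite !inE eqxx ?orbT.
  have hau : a != u by apply/negP => /eqP ha; subst a; rewrite (negbTE (self_notO u)) in haO.
  have hbu : b != u by apply/negP => /eqP hb; subst b; rewrite (negbTE (self_notO u)) in hbO.
  have [p [hp1 hp2 hp3 hp0]] := pow_facts.
  have hgle : forall y, y != u -> g y <= 2 ^ (k - 2).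
    move=> y hy; rewrite /g (negbTE hy); case: ifP => // _.
    by apply: leq_pexp2l => //; clear; lia.
  have hgood : forall x, x != u -> x \in [set a; b] -> (x \in B k.-1 v1) && (dep v1 x == 1).
    move=> x hx hxab; apply/negPn/negP => hn.
    have hgx : g x = 2 ^ (k - 3) by rewrite /g (negbTE hx) (negbTE hn).
    have := leq_trans hw hsum.
    rewrite /g eqxx -/(g a) -/(g b).
    move: hxab; rewrite !inE => /orP [/eqP hxa|/eqP hxb].
    + subst x; have := hgle b hbu; rewrite hgx hp1 hp2 hp3; clear -hp0; lia.
    + subst x; have := hgle a hau; rewrite hgx hp1 hp2 hp3; clear -hp0; lia.
  have /andP [haT /eqP had] := hgood a hau (setU11 _ _).
  have hbin : b \in [set a; b] by rewrite !inE eqxx orbT.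
  have /andP [hbT /eqP hbd] := hgood b hbu hbin.
  have eva : e v1 a by rewrite -lay1 -had; case: (depP haT).
  have evb : e v1 b by rewrite -lay1 -hbd; case: (depP hbT).
  have hgen : forall w g, e v1 w -> (w = a \/ w = b) -> e w g ->
      [/\ lay 2 v1 g, g != v1 & g != u1 -> g \in O u2].
    move=> w gg ew hw' ewg.
    have hl2 := lay2 ew ewg.
    have hgT : gg \in B k.-1 v1 by apply: inT hl2 _; clear -hk2; lia.
    have hgd : dep v1 gg = 2 by apply: depE hl2 _; clear -hk2; lia.
    split => //.
      apply/negP => /eqP hgv; subst gg.
      by have := lay_self_gt0 hl2 (ltn0Sn _); clear -hk2; lia.
    move=> hgu1.
    have hgu1T : gg \in B k.-1 u1.
      apply/negPn/negP => hn.
      case: (hY gg hgT hn) => hh; subst gg.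
      + by move: (hu_dep hgT); rewrite hgd; clear -hk; lia.
      + by move: hgd; rewrite had.
      + by move: hgd; rewrite hbd.
    have hwO : w \in O u by case: hw' => ->.
    have hgu2 : gg != u2.
      apply/negP => /eqP hg2; subst gg.
      move/eqP: hv12; apply; apply: (lay_branch ev1 ev2 hl2 (_ : lay 0 u2 u2)).
      - by rewrite lay0.
      - by clear -hk2; lia.
      - by clear -hk2; lia.
    case/orP: (SL h12 eu1 eu2 hwO ewg hgu1 hgu2) => // hh.
    by rewrite (negbTE (T_notO1 hgu1T)) in hh.
  have [g1 [g2 [hg12 ea1 ea2 _]]] := out2 a.
  have [g3 [g4 [hg34 eb3 eb4 _]]] := out2 b.
  have [l1 n1 o1] := hgen a g1 eva (or_introl erefl) ea1.
  have [l2 n2 o2] := hgen a g2 eva (or_introl erefl) ea2.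
  have [l3 n3 o3] := hgen b g3 evb (or_intror erefl) eb3.
  have [l4 n4 o4] := hgen b g4 evb (or_intror erefl) eb4.
  have hcross : forall x y, e a x -> e b y -> x != y.
    move=> x y hx hy; apply/negP => /eqP hxy; subst y.
    move/eqP: hab; apply; apply: (lay_branch eva evb (_ : lay 1 a x) (_ : lay 1 b x));
      rewrite ?lay1 //; clear -hk2; lia.
  have huniq : uniq [:: v1; g1; g2; g3; g4].
    rewrite /= !inE !negb_or !(eq_sym v1) n1 n2 n3 n4 hg12 hg34.
    by rewrite !hcross.
  have := @card_ge (O u2) _ u1 huniq.
  rewrite card_O /= => H; have : 4 <= 3; last by [].
  apply: H => x hxs hx; rewrite !inE in hxs.
  case/orP: hxs => [/eqP ?|/orP [/eqP ?|/orP [/eqP ?|/orP [/eqP ?| /eqP ?]]]]; subst x.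
  + exact: hv1O2.
  + exact: o1 hx.
  + exact: o2 hx.
  + exact: o3 hx.
  + exact: o4 hx.
- have [hl hlk] := depP hT2.
  move/eqP: hv12; apply; apply: (lay_branch ev1 ev2 (_ : lay 0 v1 v1) hl); rewrite ?lay0 //.
  by clear -hk2; lia.
Qed.

Lemma twin s t j y : (forall x, e s x -> e t x) -> y \in B j s -> y != s ->
  y \in B j t.
Proof.
move=> hst; rewrite !inB => /distP [[|i] hi hl] hys.
  by move: hl; rewrite lay0 eq_sym (negbTE hys).
move: hl; rewrite layS => /existsP [z /andP [hz hl]].
by apply/distP; exists i.+1 => //; apply: layS_first (hst _ hz) hl.
Qed.

Lemma other_out x y : e x y -> exists w, [/\ w != y, e x w & forall z, e x z -> z = y \/ z = w].
Proof.
move=> hy; have [x1 [x2 [hne h1 h2 hall]]] := out2 x.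
case: (hall _ hy) => ?; subst y.
  by exists x2; split => //; rewrite eq_sym.
by exists x1; split => // z hz; case: (hall _ hz) => ->; [right|left].
Qed.

Lemma other_in x y : e y x -> exists w, [/\ w != y, e w x & forall z, e z x -> z = y \/ z = w].
Proof.
move=> hy; have [x1 [x2 [hne h1 h2 hall]]] := in2 x.
case: (hall _ hy) => ?; subst y.
  by exists x2; split => //; rewrite eq_sym.
by exists x1; split => // z hz; case: (hall _ hz) => ->; [right|left].
Qed.

Lemma noloop x : ~~ e x x.
Proof.
apply/negP => hx; have := lay_self_gt0 (_ : lay 1 x x) (ltn0Sn _).
by rewrite lay1 => /(_ hx); clear -hk; lia.
Qed.

Lemma O_is3 s x1 x2 x3 : x1 != x2 -> x1 != x3 -> x2 != x3 ->
  x1 \in O s -> x2 \in O s -> x3 \in O s ->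
  forall y, y \in O s -> [\/ y = x1, y = x2 | y = x3].
Proof.
move=> h12 h13 h23 h1 h2 h3.
have hsub : [set x1; x2; x3] \subset O s.
  by apply/subsetP => y /set3P [] ->.
have hc : #|[set x1; x2; x3]| = 3.
  by rewrite -setUA cardsU1 !inE negb_or h12 h13 cards2 h23.
have heq : [set x1; x2; x3] = O s.
  by apply/eqP; rewrite eqEcard hsub card_O hc.
by move=> y; rewrite -heq => /set3P.
Qed.

Lemma card_all (A : {set V}) (s : seq V) : uniq s ->
  (forall x, x \in s -> x \in A) -> size s <= #|A|.
Proof.
move=> hu hs.
have h1 : #|[set x in s]| = size s by rewrite cardsE; apply/card_uniqP.
rewrite -h1; apply: subset_leq_card; apply/subsetP => x; rewrite inE; apply: hs.
Qed.

Lemma lay_uniq' i j x y : lay i x y -> lay j x y -> i <= k -> j <= k -> i != j -> False.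
Proof. by move=> h1 h2 hi hj /eqP; apply; apply: lay_uniq h1 h2 hi hj. Qed.

Lemma caseB u v u1 u2 v1 c1 c2 : u != v -> u1 != u2 -> v1 != u2 -> u1 != v1 ->
  e u u1 -> e u u2 -> e v v1 -> e v u2 -> c1 != c2 -> e v1 c1 -> e v1 c2 ->
  c1 \in O u -> c2 \in O u -> False.
Proof.
move=> huv h12 hv12 hu1v1 eu1 eu2 ev1 ev2 hc12 ec1 ec2 hc1 hc2.
have hk2 : 2 < k by clear -hk; lia.
have hv1O := L1 huv h12 hv12 hu1v1 eu1 eu2 ev1 ev2.
have hvu : v != u by rewrite eq_sym.
have hv1u1 : v1 != u1 by rewrite eq_sym.
have hu1O := L1 hvu hv12 h12 hv1u1 ev1 ev2 eu1 eu2.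
have hnl : forall c, e v1 c -> v1 != c.
  by move=> c ec; apply/negP => /eqP hc; subst c; rewrite (negbTE (noloop v1)) in ec.
have hOu := O_is3 (hnl _ ec1) (hnl _ ec2) hc12 hv1O hc1 hc2.
have hgen : forall c g, e v1 c -> c \in O u -> e c g -> g \in O u2 /\ lay 2 v1 g.
  move=> c g ec hcO ecg.
  have hl2 := lay2 ec ecg.
  have hl3 : lay 3 v g := layS_first ev1 hl2.
  split => //.
  have hgnO : g \notin O u.
    apply/negP => /hOu [] hg; subst g.
    - by have := lay_self_gt0 hl2 (ltn0Sn _); clear -hk2; lia.
    - apply: (lay_uniq' hl2 (_ : lay 1 v1 c1)) => //; rewrite ?lay1 //; clear -hk2; lia.
    - apply: (lay_uniq' hl2 (_ : lay 1 v1 c2)) => //; rewrite ?lay1 //; clear -hk2; lia.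
  have hgT : g \in B k.-1 u1.
    case: (ball_dec eu1 eu2 h12 hgnO) => // hg; exfalso.
    - subst g.
      apply: (lay_uniq' (lay_last hl3 eu2) (_ : lay 1 v u2)); rewrite ?lay1 //; clear -hk; lia.
    - have [hl hlk] := depP hg.
      move/eqP: hv12; apply; apply: (lay_branch ev1 ev2 hl2 hl) => //; clear -hk2; lia.
  have hgu1 : g != u1.
    apply/negP => /eqP hg; subst g.
    by move: hu1O; rewrite inO (lay_dist hl3) //; clear -hk; lia.
  have hgu2 : g != u2.
    apply/negP => /eqP hg; subst g.
    move/eqP: hv12; apply; apply: (lay_branch ev1 ev2 hl2 (_ : lay 0 u2 u2)); rewrite ?lay0 //;
      clear -hk2; lia.
  case/orP: (SL h12 eu1 eu2 hcO ecg hgu1 hgu2) => // hh.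
  by rewrite (negbTE (T_notO1 hgT)) in hh.
have [g1 [g2 [hg12 ea1 ea2 _]]] := out2 c1.
have [g3 [g4 [hg34 eb3 eb4 _]]] := out2 c2.
have [o1 l1] := hgen c1 g1 ec1 hc1 ea1.
have [o2 l2] := hgen c1 g2 ec1 hc1 ea2.
have [o3 l3] := hgen c2 g3 ec2 hc2 eb3.
have [o4 l4] := hgen c2 g4 ec2 hc2 eb4.
have hcross : forall x y, e c1 x -> e c2 y -> x != y.
  move=> x y hx hy; apply/negP => /eqP hxy; subst y.
  move/eqP: hc12; apply; apply: (lay_branch ec1 ec2 (_ : lay 1 c1 x) (_ : lay 1 c2 x));
    rewrite ?lay1 //; clear -hk2; lia.
have huniq : uniq [:: g1; g2; g3; g4].
  by rewrite /= !inE !negb_or hg12 hg34 !hcross.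
have := @card_all (O u2) _ huniq; rewrite card_O.
have H : forall x, x \in [:: g1; g2; g3; g4] -> x \in O u2.
  move=> x hx; rewrite !inE in hx.
  by case/orP: hx => [/eqP ->|/orP [/eqP ->|/orP [/eqP ->|/eqP ->]]].
by move=> /(_ H).
Qed.

Lemma caseA3 u v u1 u2 v1 c1 c2 : u != v -> u1 != u2 -> v1 != u2 -> u1 != v1 ->
  e u u1 -> e u u2 -> e v v1 -> e v u2 -> c1 != c2 -> e v1 c1 -> e v1 c2 ->
  c1 \in B k.-1 u1 -> c2 \in B k.-1 u1 -> ~~ e u1 c1 -> ~~ e u1 c2 -> False.
Proof.
move=> huv h12 hv12 hu1v1 eu1 eu2 ev1 ev2 hc12 ec1 ec2 hc1 hc2 hn1 hn2.
have hk2 : 2 < k by clear -hk; lia.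
have hv1O := L1 huv h12 hv12 hu1v1 eu1 eu2 ev1 ev2.
have hvu : v != u by rewrite eq_sym.
have hv1u1 : v1 != u1 by rewrite eq_sym.
have hu1O := L1 hvu hv12 h12 hv1u1 ev1 ev2 eu1 eu2.
have hcfacts : forall c, e v1 c -> c \in B k.-1 u1 -> ~~ e u1 c ->
    [/\ bad u1 v1 c, dep v1 c = 1 & lay 1 v1 c].
  move=> c ec hcT hn.
  have hl1 : lay 1 v1 c by rewrite lay1.
  have hcT' : c \in B k.-1 v1 by apply: inT hl1 _; clear -hk2; lia.
  have hd1 : dep v1 c = 1 by apply: depE hl1 _; clear -hk2; lia.
  split => //; rewrite /bad hcT hcT' hd1 /=.
  have [hl hlk] := depP hcT.
  case hd: (dep u1 c) hl => [|[|d]] hl //.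
  - move: hl; rewrite lay0 => /eqP hu1c; subst c.
    by move: hu1O; rewrite inO (lay_dist (lay2 ev1 ec)) //; clear -hk2; lia.
  - by rewrite lay1 in hl; rewrite hl in hn.
have [hb1 hd1 hl1] := hcfacts c1 ec1 hc1 hn1.
have [hb2 hd2 hl2] := hcfacts c2 ec2 hc2 hn2.
have hh : 1 + (k - 2) = k.-1 by clear -hk2; lia.
have hw1 := @weight u1 v1 (k - 2) c1 hb1 (etrans (congr1 (addn^~ _) hd1) hh).
have hw2 := @weight u1 v1 (k - 2) c2 hb2 (etrans (congr1 (addn^~ _) hd2) hh).
have hdisj : Yb u1 v1 c1 :&: Yb u1 v1 c2 = set0.
  apply/setP => y; rewrite inE in_set0; apply/negP => /andP [hy1 hy2].
  move: hy1 hy2; rewrite /Yb /Ys !in_set => /andP [/andP [hyv _] /andP [hlt1 hly1]]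
    /andP [_ /andP [hlt2 hly2]].
  rewrite -inB in hyv; have [_ hyk] := depP hyv.
  rewrite hd1 in hlt1 hly1; rewrite hd2 in hlt2 hly2.
  move/eqP: hc12; apply.
  by apply: (lay_split_uniq hl1 hly1 hl2 hly2); clear -hyk hlt1; lia.
have hcard : #|O u :\ v1| == 2.
  have := cardsD1 v1 (O u); rewrite card_O hv1O /= => hh'.
  by apply/eqP; clear -hh'; lia.
have [p [q [hpq hOpq]]] := cards2P _ hcard.
have hu_dep : u \in B k.-1 v1 -> dep v1 u = k.-1.
  move=> hu; have [hl hlk] := depP hu.
  case: (ltnP (dep v1 u).+1 k) => hdk; last by clear -hdk hlk; lia.
  have := lay_uniq (layS_first ev1 (lay_last hl eu2)) (_ : lay 1 v u2).
  by rewrite lay1 => /(_ ev2 hdk (ltnW (ltnW hk2))).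
pose g y := if y == u then 1 else 2 ^ (k - 3).
have hmem : forall c y, dep v1 c = 1 -> y \in Yb u1 v1 c ->
    [/\ y \in [set u; p; q], y \in B k.-1 v1 & 1 < dep v1 y].
  move=> c y hdc hy; rewrite /Yb /Ys !in_set in hy.
  case/andP: hy => /andP [hyv hyu] /andP [hlt _].
  rewrite -inB in hyv; rewrite -inB in hyu; rewrite hdc in hlt.
  split => //.
  have hyu2 : y \notin B k.-1 u2.
    apply/negP => hy2; have [l1 l1k] := depP hyv; have [l2 l2k] := depP hy2.
    by move/eqP: hv12; apply; apply: lay_branch ev1 ev2 l1 l2 l1k l2k.
  case hyo: (y \in O u).
    have hyv1 : y != v1.
      apply/negP => /eqP hy; subst y.
      by move: hlt; rewrite (depE (_ : lay 0 v1 v1)) ?lay0 //; clear -hk2; lia.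
    have : y \in O u :\ v1 by rewrite in_setD1 hyv1 hyo.
    by rewrite hOpq => /set2P [] ->; rewrite !inE eqxx ?orbT.
  case: (ball_dec eu1 eu2 h12 (negbT hyo)) => [->|hh'|hh']; first by rewrite !inE eqxx.
  + by rewrite hh' in hyu.
  + by rewrite hh' in hyu2.
have [pp [hp1 hp2 hp3 hp0]] := pow_facts.
have hsum : \sum_(y in Yb u1 v1 c1 :|: Yb u1 v1 c2) wt v1 y <= g u + g p + g q.
  apply: leq_trans (sum3 g u p q).
  apply: leq_trans (_ : \sum_(y in Yb u1 v1 c1 :|: Yb u1 v1 c2) g y <= _).
    apply: leq_sum => yy hy.
    have [hy3 hyv hlt] : [/\ yy \in [set u; p; q], yy \in B k.-1 v1 & 1 < dep v1 yy].
      by case/setUP: hy => hy; [apply: (hmem c1) | apply: (hmem c2)].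
    rewrite /wt /g; case: eqP => [hyu'|_].
      by subst yy; rewrite (hu_dep hyv) subnn.
    by apply: leq_pexp2l => //; clear -hlt; lia.
  apply: sum_sub; apply/subsetP => y hy.
  by case/setUP: hy => hy; [case: (hmem c1 y hd1 hy) | case: (hmem c2 y hd2 hy)].
have := leq_trans (leq_add hw1 hw2) (leq_trans (eq_leq (esym (sum_disj _ hdisj))) hsum).
rewrite /g eqxx.
have hgle : forall y, (if y == u then 1 else 2 ^ (k - 3)) <= 2 ^ (k - 3).
  by move=> y; case: eqP => // _; rewrite expn_gt0.
move: (hgle p) (hgle q); rewrite hp2 hp3; clear -hp0; lia.
Qed.

Lemma O_third s x1 x2 : x1 != x2 -> x1 \in O s -> x2 \in O s ->
  exists x3, [/\ x3 \in O s, x3 != x1 & x3 != x2].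
Proof.
move=> h12 h1 h2.
have : #|O s :\ x1 :\ x2| = 1.
  have := cardsD1 x1 (O s); have := cardsD1 x2 (O s :\ x1).
  rewrite card_O h1 in_setD1 h2 eq_sym h12 /=; clear; lia.
move/eqP/cards1P => [x3 hx3].
have : x3 \in O s :\ x1 :\ x2 by rewrite hx3 set11.
rewrite !in_setD1 => /and3P [h32 h31 h3].
by exists x3.
Qed.

Lemma neq_O s x y : x \in O s -> y \notin O s -> x != y.
Proof. by move=> hx hy; apply/negP => /eqP hxy; subst y; rewrite hx in hy. Qed.

Lemma caseA1 u v u1 u2 v1 : u != v -> u1 != u2 -> v1 != u2 -> u1 != v1 ->
  e u u1 -> e u u2 -> e v v1 -> e v u2 -> (forall x, e u1 x = e v1 x) -> False.
Proof.
move=> huv h12 hv12 hu1v1 eu1 eu2 ev1 ev2 htw.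
have hk2 : 2 < k by clear -hk; lia.
have hv1O := L1 huv h12 hv12 hu1v1 eu1 eu2 ev1 ev2.
have hvu : v != u by rewrite eq_sym.
have hv1u1 : v1 != u1 by rewrite eq_sym.
have hu1O := L1 hvu hv12 h12 hv1u1 ev1 ev2 eu1 eu2.
have htw1 : forall x, e u1 x -> e v1 x by move=> x; rewrite htw.
have htw2 : forall x, e v1 x -> e u1 x by move=> x; rewrite htw.
have [c1 [c2 [hc12 ec1 ec2 _]]] := out2 u1.
have ec1' := htw1 _ ec1.
have hneq_e : forall x y, e x y -> x != y.
  by move=> x y hxy; apply/negP => /eqP hh; subst y; rewrite (negbTE (noloop x)) in hxy.
have hk1 : 0 < k by clear -hk; lia.
have hvO : v \in O u.
  case hvo: (v \in O u) => //; exfalso.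
  case: (ball_dec eu1 eu2 h12 (negbT hvo)) => [hh|hh|hh].
  - by rewrite hh eqxx in huv.
  - have hvu1 : v != u1 by rewrite eq_sym; apply: neq_O hu1O (self_notO v).
    have [hl hlk] := depP (twin htw1 hh hvu1).
    exact: noback hl ev1 hlk.
  - have [hl hlk] := depP hh; exact: noback hl ev2 hlk.
have [a [haO hav hav1]] := O_third (hneq_e _ _ ev1) hvO hv1O.
have hva : v != a by rewrite eq_sym.
have hv1a : v1 != a by rewrite eq_sym.
have hOu := O_is3 (hneq_e _ _ ev1) hva hv1a hvO hv1O haO.
have huO : u \in O v.
  case huo: (u \in O v) => //; exfalso.
  case: (ball_dec ev1 ev2 hv12 (negbT huo)) => [hh|hh|hh].
  - by rewrite hh eqxx in huv.
  - have huv1 : u != v1 by rewrite eq_sym; apply: neq_O hv1O (self_notO u).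
    have [hl hlk] := depP (twin htw2 hh huv1).
    exact: noback hl eu1 hlk.
  - have [hl hlk] := depP hh; exact: noback hl eu2 hlk.
have hu2nO : u2 \notin O u by apply: T_notO eu2 _; rewrite inB dist_refl.
have hu1nO : u1 \notin O u by apply: T_notO eu1 _; rewrite inB dist_refl.
have haOv : a \in O v.
  case hao: (a \in O v) => //; exfalso.
  case: (ball_dec ev1 ev2 hv12 (negbT hao)) => [hh|hh|hh].
  - by rewrite hh eqxx in hav.
  - have := T_notO eu1 (twin htw2 hh hav1); by rewrite haO.
  - have := T_notO eu2 hh; by rewrite haO.
have hau1 : a != u1 := neq_O haO hu1nO.
have hau2 : a != u2 := neq_O haO hu2nO.
have huu1 : u != u1 := hneq_e _ _ eu1.
have hua : u != a by rewrite eq_sym; apply: neq_O haO (self_notO u).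
have hu1a : u1 != a by rewrite eq_sym.
have hOv := O_is3 huu1 hua hu1a huO hu1O haOv.
have [w1 [hw1u ew1 hw1all]] := other_in eu1.
have [s [hsu1 ew1s hsall]] := other_out ew1.
have hw1v : w1 != v.
  apply/negP => /eqP hh; subst w1.
  by move/eqP: hu1v1; apply; apply: out_third ew1 ev1 ev2 h12 hv12.
have hsu2 : s != u2.
  apply/negP => /eqP hh; subst s.
  move/eqP: huv; apply; apply: in_third eu2 ev2 ew1s _ _; by rewrite eq_sym.
have hsO : s \in O u.
  by apply: (@L1 u w1 u2 u1 s) => //; rewrite eq_sym.
have hsa : s = a.
  case: (hOu _ hsO) => // hh; subst s; exfalso.
  - have hu1v : u1 != v by apply: neq_O hu1O (self_notO v).
    move/eqP: hu1v; apply; apply: (lay_branch ew1 ew1s (_ : lay 1 u1 c1) (lay2 ev1 ec1'));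
      rewrite ?lay1 //; clear -hk2; lia.
  - move/eqP: hu1v1; apply; apply: (lay_branch ew1 ew1s (_ : lay 1 u1 c1) (_ : lay 1 v1 c1));
      rewrite ?lay1 //; clear -hk2; lia.
subst s.
have [w2 [hw2v ew2 hw2all]] := other_in ev1.
have [s [hsv1 ew2s hsall2]] := other_out ew2.
have hw2u : w2 != u.
  apply/negP => /eqP hh; subst w2.
  by move/eqP: hv1u1; apply; apply: out_third ew2 eu1 eu2 hv12 h12.
have hsu2' : s != u2.
  apply/negP => /eqP hh; subst s.
  move/eqP: huv; apply; apply: in_third eu2 ev2 ew2s _ _; by rewrite eq_sym.
have hs2O : s \in O v.
  by apply: (@L1 v w2 u2 v1 s) => //; rewrite eq_sym.
have hs2a : s = a.
  case: (hOv _ hs2O) => // hh; subst s; exfalso.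
  - have hv1u : v1 != u by apply: neq_O hv1O (self_notO u).
    move/eqP: hv1u; apply; apply: (lay_branch ew2 ew2s (_ : lay 1 v1 c1) (lay2 eu1 ec1));
      rewrite ?lay1 //; clear -hk2; lia.
  - move/eqP: hv1u1; apply; apply: (lay_branch ew2 ew2s (_ : lay 1 v1 c1) (_ : lay 1 u1 c1));
      rewrite ?lay1 //; clear -hk2; lia.
subst s.
have hw12 : w1 != w2.
  apply/negP => /eqP hh; subst w2.
  by move/eqP: hu1v1; apply; apply: out_third ew1 ew2 ew1s hu1a hv1a.
have hu2O : u2 \in O w1.
  by apply: (@L1 w1 u a u1 u2) => //; rewrite eq_sym.
have hv1Ow : v1 \in O w1.
  by apply: (@L1 w1 w2 u1 a v1) => //; rewrite eq_sym.
have hw2O : w2 \in O w1.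
  case hwo: (w2 \in O w1) => //; exfalso.
  case: (ball_dec ew1 ew1s hu1a (negbT hwo)) => [hh|hh|hh].
  - by rewrite hh eqxx in hw12.
  - have hw2u1 : w2 != u1.
      apply/negP => /eqP hh'; subst w2.
      by move: (htw1 _ ew2); rewrite (negbTE (noloop v1)).
    have [hl hlk] := depP (twin htw1 hh hw2u1).
    exact: noback hl ew2 hlk.
  - have [hl hlk] := depP hh; exact: noback hl ew2s hlk.
have hw2v1 : w2 != v1 := hneq_e _ _ ew2.
have hw2u2 : w2 != u2.
  apply/negP => /eqP hh; subst w2.
  apply: (lay_uniq' (lay2 ev2 ew2) (_ : lay 1 v v1)); rewrite ?lay1 //; clear -hk2; lia.
have hv1u2 : v1 != u2 := hv12.
have hOw1 := O_is3 hw2v1 hw2u2 hv1u2 hw2O hv1Ow hu2O.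
have huTa : u \in B k.-1 a.
  have hunO : u \notin O w1.
    apply/negP => /hOw1 [] hh; subst u.
    - by rewrite eqxx in hw2u.
    - by rewrite (negbTE (self_notO v1)) in hv1O.
    - by rewrite (negbTE (noloop u2)) in eu2.
  case: (ball_dec ew1 ew1s hu1a hunO) => [hh|hh|//].
  - by rewrite hh eqxx in hw1u.
  - have [hl hlk] := depP hh; case: (noback hl eu1 hlk).
have hsubT : forall y, y \in B k.-1 u2 -> y != u2 -> y != w1 -> y != w2 -> y \in B k.-1 a.
  move=> y hy hyu2 hyw1 hyw2.
  have hynO : y \notin O w1.
    apply/negP => /hOw1 [] hh; subst y.
    - by rewrite eqxx in hyw2.
    - have [hl hlk] := depP hy.
      move/eqP: hv12; apply; apply: (lay_branch ev1 ev2 (_ : lay 0 v1 v1) hl);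
        rewrite ?lay0 //.
    - by rewrite eqxx in hyu2.
  case: (ball_dec ew1 ew1s hu1a hynO) => [hh|hh|//].
  - by rewrite hh eqxx in hyw1.
  - have [hl hlk] := depP hh; have [hl' hlk'] := depP hy.
    by move/eqP: h12; case; apply: (lay_branch eu1 eu2 hl hl').
have hwdep : forall w x, e w x -> (x == u1) || (x == v1) -> w \in B k.-1 u2 -> dep u2 w = k.-1.
  move=> w x ewx hx hw; have [hl hlk] := depP hw.
  case: (ltnP (dep u2 w).+1 k) => hdk; last by clear -hdk hlk; lia.
  case/orP: hx => /eqP hx; subst x.
  - by move/eqP: h12; case; apply: (lay_branch eu1 eu2 (_ : lay 0 u1 u1) (lay_last hl ewx));
      rewrite ?lay0.
  - by move/eqP: hv12; case; apply: (lay_branch ev1 ev2 (_ : lay 0 v1 v1) (lay_last hl ewx));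
      rewrite ?lay0.
have [g1 [g2 [hg12 eg1 eg2 _]]] := out2 u2.
have hchild : forall g, e u2 g -> e a g.
  move=> g eg.
  have hlg : lay 1 u2 g by rewrite lay1.
  have hgT : g \in B k.-1 u2 by apply: inT hlg _; clear -hk2; lia.
  have hgd : dep u2 g = 1 by apply: depE hlg _; clear -hk2; lia.
  have hgw : forall w x, e w x -> (x == u1) || (x == v1) -> g != w.
    move=> w x ewx hx; apply/negP => /eqP hh; subst w.
    by move: (hwdep _ _ ewx hx hgT); rewrite hgd; clear -hk; lia.
  have hx2 : (v1 == u1) || (v1 == v1) by rewrite eqxx orbT.
  have hx1 : (u1 == u1) || (u1 == v1) by rewrite eqxx.
  have hgu2 : g != u2 by rewrite eq_sym (hneq_e _ _ eg).
  have hgTa := hsubT g hgT hgu2 (hgw _ _ ew1 hx1) (hgw _ _ ew2 hx2).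
  have hga : g != a by rewrite eq_sym; apply: neq_O haO (T_notO eu2 hgT).
  have [hla hlak] := depP hgTa.
  case hd: (dep a g) hla => [|[|d]] hla.
  - by move: hla; rewrite lay0 eq_sym (negbTE hga).
  - by rewrite lay1 in hla.
  exfalso.
  have hbad : bad a u2 g by rewrite /bad hgTa hgT hgd hd.
  have hh : dep u2 g + (k - 2) = k.-1 by rewrite hgd; clear -hk2; lia.
  have hw := @weight a u2 (k - 2) g hbad hh.
  have hYb : forall y, y \in Yb a u2 g -> ((y == w1) || (y == w2)) && (wt u2 y == 1).
    move=> y hy; rewrite /Yb /Ys !in_set in hy.
    case/andP: hy => /andP [hyv hyu] /andP [hlt _].
    rewrite -inB in hyv; rewrite -inB in hyu; rewrite hgd in hlt.
    have hyu2 : y != u2.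
      apply/negP => /eqP hh'; subst y.
      by move: hlt; rewrite (depE (_ : lay 0 u2 u2)) ?lay0 //; clear -hk2; lia.
    have hyw : (y == w1) || (y == w2).
      apply/negPn/negP; rewrite negb_or => /andP [h1 h2].
      by rewrite (hsubT y hyv hyu2 h1 h2) in hyu.
    rewrite hyw /= /wt.
    case/orP: hyw => /eqP hh'; subst y.
    - by rewrite (hwdep _ _ ew1 hx1 hyv) subnn.
    - by rewrite (hwdep _ _ ew2 hx2 hyv) subnn.
  have hle : \sum_(y in Yb a u2 g) wt u2 y <= 2.
    apply: leq_trans (_ : \sum_(y in [set w1; w2]) 1 <= 2); last first.
      by apply: leq_trans (sumU_le _ _ _) _; rewrite !big_set1.
    apply: leq_trans (_ : \sum_(y in Yb a u2 g) 1 <= _).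
      by apply: leq_sum => y /hYb /andP [_ /eqP ->].
    apply: sum_sub; apply/subsetP => y /hYb /andP [/orP [/eqP ->|/eqP ->] _];
      by rewrite !inE eqxx ?orbT.
  have [pp [hp1 hp2 hp3 hp0]] := pow_facts.
  by move: (leq_trans hw hle); rewrite hp2; clear -hp0; lia.
have ea1 := hchild _ eg1.
have ea2 := hchild _ eg2.
have hta : forall x, e a x -> e u2 x.
  move=> x ex; case: (eqVneq x g2) => [->|hx2] //.
  by rewrite (out_third ex ea1 ea2 hx2 hg12).
have [hl hlk] := depP (twin hta huTa hua).
exact: noback hl eu2 hlk.
Qed.

Lemma L3 u v u1 u2 v1 : u != v -> u1 != u2 -> v1 != u2 -> u1 != v1 ->
  e u u1 -> e u u2 -> e v v1 -> e v u2 -> #|O u :&: Nout e v1| = 1.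
Proof.
move=> huv h12 hv12 hu1v1 eu1 eu2 ev1 ev2.
have hk2 : 2 < k by clear -hk; lia.
have [c1 [c2 [hc12 ec1 ec2 hall]]] := out2 v1.
have hloc : forall c, e v1 c -> (c \in O u) || (c \in B k.-1 u1).
  move=> c ec; case hco: (c \in O u) => //=.
  case: (ball_dec eu1 eu2 h12 (negbT hco)) => [hh|//|hh]; exfalso.
  - subst c.
    apply: (lay_uniq' (layS_first ev1 (lay_last (_ : lay 1 v1 u) eu2)) (_ : lay 1 v u2));
      rewrite ?lay1 //; clear -hk; lia.
  - have [hl hlk] := depP hh.
    move/eqP: hv12; apply; apply: (lay_branch ev1 ev2 (_ : lay 1 v1 c) hl); rewrite ?lay1 //.
    by clear -hk2; lia.
have hone : forall c c', e v1 c -> e v1 c' -> c != c' -> c \in O u -> c' \notin O u ->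
    #|O u :&: Nout e v1| = 1.
  move=> c c' ec ec' hcc' hc hc'.
  have -> : O u :&: Nout e v1 = [set c]; last by rewrite cards1.
  apply/setP => x; rewrite in_setI [x \in Nout e v1]inE in_set1.
  apply/andP/eqP => [[hxO ex]|->]; last by split.
  case: (eqVneq x c') => [hh|hxc']; first by subst x; rewrite hxO in hc'.
  exact: out_third ex ec ec' hxc' hcc'.
case hc1: (c1 \in O u); case hc2: (c2 \in O u).
- by case: (caseB huv h12 hv12 hu1v1 eu1 eu2 ev1 ev2 hc12 ec1 ec2 hc1 hc2).
- by apply: (hone c1 c2) => //; rewrite hc2.
- by apply: (hone c2 c1) => //; rewrite ?hc1 // eq_sym.
have hT1 : c1 \in B k.-1 u1 by move: (hloc _ ec1); rewrite hc1.
have hT2 : c2 \in B k.-1 u1 by move: (hloc _ ec2); rewrite hc2.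
exfalso.
have hL1u1 : forall c c', e u1 c' -> ~~ e u1 c -> e v1 c -> e v1 c' -> c != c' ->
    c \in B k.-1 u1 -> False.
  move=> c c' ec' hn ec ecv hcc' hcT.
  have [q [hqc' equ hqall]] := other_out ec'.
  have hqc : q != c by apply/negP => /eqP hh; subst q; rewrite equ in hn.
  have := @L1 u1 v1 q c' c hu1v1 hqc' (_ : c != c') hqc equ ec' ec ecv.
  by move=> /(_ hcc'); rewrite (negbTE (T_notO1 hcT)).
case e1: (e u1 c1); case e2: (e u1 c2).
- apply: (caseA1 huv h12 hv12 hu1v1 eu1 eu2 ev1 ev2) => x.
  apply/idP/idP => hx.
  + case: (eqVneq x c2) => [->|hxc2] //.
    by rewrite (out_third hx e1 e2 hxc2 hc12).
  + case: (eqVneq x c2) => [->|hxc2] //.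
    by rewrite (out_third hx ec1 ec2 hxc2 hc12).
- by apply: (hL1u1 c2 c1) => //; rewrite ?e2 // eq_sym.
- by apply: (hL1u1 c1 c2) => //; rewrite e1.
- by apply: (caseA3 huv h12 hv12 hu1v1 eu1 eu2 ev1 ev2 hc12 ec1 ec2 hT1 hT2);
    rewrite ?e1 ?e2.
Qed.

Lemma main u v u1 u2 v1 : u != v ->
  Nout e u :&: Nout e v = [set u2] ->
  Nout e u = [set u1; u2] ->
  Nout e v = [set v1; u2] ->
  [/\ v1 \in outlier e k u, u1 \in outlier e k v,
      #|outlier e k u :&: Nout e v1| = 1 &
      #|outlier e k v :&: Nout e u1| = 1].
Proof.
move=> huv hI hu hv.
have [hcu _] := Hd u; have [hcv _] := Hd v.
have h12 : u1 != u2.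
  by apply/negP => /eqP h; subst u2; rewrite hu cards2 eqxx in hcu.
have hv12 : v1 != u2.
  by apply/negP => /eqP h; subst u2; rewrite hv cards2 eqxx in hcv.
have eu1 : e u u1.
  have : u1 \in Nout e u by rewrite hu !inE eqxx.
  by rewrite inE.
have eu2 : e u u2.
  have : u2 \in Nout e u by rewrite hu !inE eqxx orbT.
  by rewrite inE.
have ev1 : e v v1.
  have : v1 \in Nout e v by rewrite hv !inE eqxx.
  by rewrite inE.
have ev2 : e v u2.
  have : u2 \in Nout e v by rewrite hv !inE eqxx orbT.
  by rewrite inE.
have hu1v1 : u1 != v1.
  apply/negP => /eqP h; subst v1.
  have : u1 \in Nout e u :&: Nout e v by rewrite in_setI !inE eu1 ev1.
  by rewrite hI in_set1 (negbTE h12).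
have hvu : v != u by rewrite eq_sym.
have hv1u1 : v1 != u1 by rewrite eq_sym.
split.
- exact: L1 huv h12 hv12 hu1v1 eu1 eu2 ev1 ev2.
- exact: L1 hvu hv12 h12 hv1u1 ev1 ev2 eu1 eu2.
- exact: L3 huv h12 hv12 hu1v1 eu1 eu2 ev1 ev2.
- exact: L3 hvu hv12 h12 hv1u1 ev1 ev2 eu1 eu2.
Qed.

End Work.

Theorem corollary4 (V : finType) (e : rel V) (k : nat) (u v u1 u2 v1 : V) :
  4 <= k ->
  digraph_2k3 e k ->
  u != v ->
  Nout e u :&: Nout e v = [set u2] ->
  Nout e u = [set u1; u2] ->
  Nout e v = [set v1; u2] ->
  [/\ v1 \in outlier e k u, u1 \in outlier e k v,
      #|outlier e k u :&: Nout e v1| = 1 &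
      #|outlier e k v :&: Nout e u1| = 1].
Proof.
move=> hk [Hg Hd Hn] huv hI hu hv.
exact: (main Hg Hd Hn hk huv hI hu hv).
Qed.
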